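(* A tree has a good subgraph if and only if it has a good subgraph that is a tree (a good subtree).
   Context: Graphs are finite. A leaf is a vertex of degree one. Good subgraph: Let $H$ be a graph, $Q$ a subgraph of $H$ without isolated vertices, and $E_Q^-$ the set of edges of $H$ not in $Q$ incident with at least one vertex of $Q$. $Q$ is a good subgraph of $H$ if there exist a set of edges $E$ with $E_Q^-\subseteq E\subseteq E_H\setminus E_Q$ and an orientation $A_E$ of the edges of $E$ (where $d^+(x)$, $d^-(x)$ denote the numbers of arcs of $A_E$ leaving, resp. entering $x$, and $d_H(x)$ is the degree in $H$) such that the arcs of $A_E$ form a family $\mathcal P=\{P_x: x\in V_Q\}$ of oriented paths indexed by the vertices of $Q$ with: (i) every vertex $v$ of $Q$ is the initial vertex of exactly one path of $\mathcal P$, and $d^+(v)=1$, $d^-(v)=d_H(v)-d_Q(v)-1$; (ii) if $x$ is an inner vertex of a path of $\mathcal P$, then $d^+(x)=1$ and $d^-(x)=d_H(x)-1$; (iii) if $x$ is an end vertex of a path of $\mathcal P$, then $d^-(x)<d_H(x)$. *)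

(* Defs.v *)
(* Finite simple graphs on a finType T given by a
   symmetric irreflexive relation e : rel T. *)
From mathcomp Require Import all_boot.
Set Implicit Arguments. Unset Strict Implicit. Unset Printing Implicit Defensive.

Section Graphs.
Variable T : finType.

Definition edges (e : rel T) : {set {set T}} :=
  [set s : {set T} | [exists x : T, exists y : T, e x y && (s == [set x; y])]].

Definition degH (e : rel T) (x : T) : nat := #|[set y | e x y]|.

(* A subgraph Q without isolated vertices is determined by its edge set EQ. *)
Definition sub_vertices (EQ : {set {set T}}) : {set T} :=
  [set x | [exists s in EQ, x \in s]].

Definition sub_rel (EQ : {set {set T}}) : rel T := fun x y => [set x; y] \in EQ.

Definition degQ (EQ : {set {set T}}) (x : T) : nat := #|[set s in EQ | x \in s]|.

Definition EQminus (e : rel T) (EQ : {set {set T}}) : {set {set T}} :=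
  [set s in edges e :\: EQ | [exists x in s, x \in sub_vertices EQ]].

Definition dout (A : {set T * T}) (x : T) : nat := #|[set y | (x, y) \in A]|.
Definition din (A : {set T * T}) (x : T) : nat := #|[set y | (y, x) \in A]|.

Definition orientation_of (E : {set {set T}}) (A : {set T * T}) : Prop :=
  (forall x y, (x, y) \in A -> [set x; y] \in E) /\
  (forall x y, x != y -> [set x; y] \in E -> ((x, y) \in A) (+) ((y, x) \in A)).

Definition arcs_of (v : T) (p : seq T) : seq (T * T) := zip (v :: p) p.

(* Good subgraph (see the paper's definition).  The path P_v is v :: P v. *)
Definition good_subgraph (e : rel T) (EQ : {set {set T}}) : Prop :=
  [/\ EQ != set0, EQ \subset edges e &
  exists E : {set {set T}},
  [/\ EQminus e EQ \subset E, E \subset edges e :\: EQ &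
  exists A : {set T * T}, orientation_of E A /\
  exists P : T -> seq T,
    [/\
        forall v, v \in sub_vertices EQ ->
          uniq (v :: P v) && path (fun x y => (x, y) \in A) v (P v),
        forall a, a \in A <-> exists2 v, v \in sub_vertices EQ & a \in arcs_of v (P v),
        forall v, v \in sub_vertices EQ ->
          dout A v = 1 /\ din A v + degQ EQ v + 1 = degH e v,
        (* (ii) inner vertices *)
        forall v x, v \in sub_vertices EQ -> x \in behead (belast v (P v)) ->
          dout A x = 1 /\ din A x + 1 = degH e x &
        forall v x, v \in sub_vertices EQ -> (x = v \/ x = last v (P v)) ->
          din A x < degH e x]]].

Definition is_tree (V : {set T}) (r : rel T) : Prop :=
  [/\ V != set0,
      forall x y, x \in V -> y \in V ->
        exists p : seq T, [/\ path r x p, all (mem V) p & last x p = y] &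
      forall c : seq T, all (mem V) c -> uniq c -> 3 <= size c -> ~~ cycle r c].

End Graphs.

(* Main.v *)
Require Import Defs.
From mathcomp Require Import all_boot.
Set Implicit Arguments. Unset Strict Implicit. Unset Printing Implicit Defensive.

Section Gen.
Variable T : finType.
Variable e : rel T.
Hypothesis esym : symmetric e.
Hypothesis eirr : irreflexive e.

Lemma set2_eq (a b c d : T) : c != d -> [set a; b] = [set c; d] ->
  (a = c /\ b = d) \/ (a = d /\ b = c).
Proof.
move=> ncd E.
have ha: a \in [set c; d] by rewrite -E !inE eqxx.
have hb: b \in [set c; d] by rewrite -E !inE eqxx orbT.
have hc: c \in [set a; b] by rewrite E !inE eqxx.
have hd: d \in [set a; b] by rewrite E !inE eqxx orbT.
move: ha hb hc hd; rewrite !inE.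
case/orP=> /eqP ha; case/orP=> /eqP hb; case/orP=> /eqP hc; case/orP=> /eqP hd;
 subst; by [left | right | rewrite eqxx in ncd].
Qed.

Lemma edgeP s : s \in edges e -> exists x y, [/\ e x y, x != y & s = [set x; y]].
Proof.
rewrite inE => /existsP[x /existsP[y /andP[exy /eqP E]]].
exists x, y; split => //; apply: contraTneq exy => ->; by rewrite eirr.
Qed.

Lemma edge2 a b : [set a; b] \in edges e -> e a b.
Proof.
move/edgeP=> [x [y [exy nxy E]]].
case: (set2_eq nxy E) => [[-> ->]|[-> ->]] //; by rewrite esym.
Qed.

Fixpoint nb (s : seq T) : bool :=
  match s with
  | x :: ((_ :: z :: _) as t) => (x != z) && nb t
  | _ => true
  end.

Hypothesis acyc : forall c : seq T, uniq c -> 3 <= size c -> ~~ cycle e c.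

Lemma nb_uniq t x : path e x t -> nb (x :: t) -> uniq (x :: t).
Proof.
elim: t x => [|y t IH] x //=.
case/andP=> exy pyt hnb.
have nbt : nb (y :: t) by move: hnb; case: t {IH pyt} => // z t' /andP[].
have := IH y pyt nbt => /= /andP[ynt ut].
rewrite ynt ut !andbT inE negb_or.
have -> : x != y by apply: contraTneq exy => ->; rewrite eirr.
apply/negP=> xt.
case/splitPr: xt hnb pyt ynt ut => t1 t2 hnb pyt ynt ut.
case: t1 hnb pyt ynt ut => [|z t1] hnb pyt ynt ut.
  by move: hnb => /=; rewrite eqxx.
have Hc : cycle e [:: x, y, z & t1].
  rewrite /= exy /=.
  move: pyt; rewrite -cat_rcons /= cat_path.
  by case/and3P=> -> ->.
have Hu : uniq [:: x, y, z & t1].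
  have : uniq ((y :: z :: t1) ++ x :: t2) by rewrite cons_uniq ynt ut.
  by rewrite -cat_rcons cat_uniq rcons_uniq => /andP[].
by move: (acyc Hu (isT : 3 <= size [:: x, y, z & t1])); rewrite Hc.
Qed.

Lemma arcs_mem (a b u : T) p : (a, b) \in arcs_of u p -> a \in u :: p /\ b \in p.
Proof.
elim: p u => [|y p IH] u //=.
rewrite inE => /orP[/eqP[-> ->]|/IH[h1 h2]]; first by rewrite !inE !eqxx ?orbT.
by split; rewrite inE ?h1 ?h2 orbT.
Qed.

Lemma arcs_pred (b u : T) p : b \in p -> exists a, (a, b) \in arcs_of u p.
Proof.
elim: p u => [|y p IH] u //=.
rewrite inE => /orP[/eqP->|/(IH y)[a ha]]; first by exists u; rewrite inE eqxx.
by exists a; rewrite inE ha orbT.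
Qed.

Lemma mem_end (x u : T) p : x \in p -> x = last u p \/ x \in behead (belast u p).
Proof.
elim: p u => [|y p IH] u //=.
rewrite inE => /orP[/eqP->|/(IH y)[->|h]].
- case: p {IH} => [|z p] /=; [by left | by right; rewrite inE eqxx].
- by left.
- by right; apply: mem_behead.
Qed.
End Gen.

Lemma svP (T : finType) (F : {set {set T}}) x :
  reflect (exists2 s, s \in F & x \in s) (x \in sub_vertices F).
Proof.
rewrite /sub_vertices inE; apply: (iffP existsP) => [[s /andP[h1 h2]]|[s h1 h2]].
  by exists s.
by exists s; rewrite h1 h2.
Qed.

Section Main.
Variable T : finType.
Variable e : rel T.
Hypothesis esym : symmetric e.
Hypothesis eirr : irreflexive e.
Hypothesis acyc : forall c : seq T, uniq c -> 3 <= size c -> ~~ cycle e c.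
Variables (EQ E : {set {set T}}) (A : {set T * T}) (P : T -> seq T).
Hypothesis hEQ : EQ \subset edges e.
Hypothesis hE1 : EQminus e EQ \subset E.
Hypothesis hE2 : E \subset edges e :\: EQ.
Hypothesis hor : orientation_of E A.
Hypothesis hA : forall a, a \in A <-> exists2 v, v \in sub_vertices EQ & a \in arcs_of v (P v).
Hypothesis hi : forall v, v \in sub_vertices EQ ->
  dout A v = 1 /\ din A v + degQ EQ v + 1 = degH e v.
Hypothesis hii : forall v x, v \in sub_vertices EQ -> x \in behead (belast v (P v)) ->
  dout A x = 1 /\ din A x + 1 = degH e x.
Hypothesis hiii : forall v x, v \in sub_vertices EQ -> (x = v \/ x = last v (P v)) ->
  din A x < degH e x.

Local Notation Qv := (sub_vertices EQ).

Lemma arcE a b : (a, b) \in A -> [set a; b] \in E.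
Proof. exact: hor.1. Qed.

Lemma arcE2 a b : (a, b) \in A -> [set a; b] \in edges e /\ [set a; b] \notin EQ.
Proof.
move/arcE => h; have := subsetP hE2 _ h; rewrite inE => /andP[h1 h2]; by split.
Qed.

Lemma arc_e a b : (a, b) \in A -> e a b.
Proof. by case/arcE2 => /(edge2 esym eirr). Qed.

Lemma arc_nQ a b : (a, b) \in A -> ~~ sub_rel EQ a b.
Proof. by case/arcE2. Qed.

Lemma arc_asym a b : (a, b) \in A -> (b, a) \notin A.
Proof.
move=> h; have nab : a != b by apply: contraTneq (arc_e h) => ->; rewrite eirr.
by have := hor.2 a b nab (arcE h); rewrite h addTb.
Qed.

Lemma subrel_sym a b : sub_rel EQ a b = sub_rel EQ b a.
Proof. by rewrite /sub_rel setUC. Qed.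

Lemma subrel_e a b : sub_rel EQ a b -> e a b.
Proof. move=> h; apply: (edge2 esym eirr); exact: (subsetP hEQ). Qed.

Lemma subrel_Qv a b : sub_rel EQ a b -> a \in Qv /\ b \in Qv.
Proof.
move=> h; split; apply/svP; exists [set a; b] => //; by rewrite !inE eqxx ?orbT.
Qed.

Lemma lt_of_arc a b : (a, b) \in A -> din A b < degH e b.
Proof.
case/hA => u hu /arcs_mem [_ hb].
case: (mem_end u hb) => [->|h]; first exact: hiii hu (or_intror erefl).
by have [_ <-] := hii hu h; rewrite addn1 ltnSn.
Qed.

Lemma lt_of_Q v : v \in Qv -> din A v < degH e v.
Proof. by move/hi=> [_ <-]; rewrite addn1 ltnS leq_addr. Qed.

Lemma back_step x p : x \notin Qv -> (x, p) \in A -> exists z, (z, x) \in A.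
Proof.
move=> nx /hA [u hu /arcs_mem [hx _]].
have xu : x \in P u.
  by move: hx; rewrite inE => /orP[/eqP xu|//]; rewrite xu hu in nx.
case: (arcs_pred u xu) => z hz; exists z; apply/hA; by exists u.
Qed.

Definition St (s : seq T) : bool :=
  if s is x :: t then
    [&& nb s, path e x t & if t is p :: _ then (x, p) \in A else x \in Qv]
  else false.

Lemma qwalk q x t : uniq (x :: q) -> path (sub_rel EQ) x q -> nb (x :: t) -> path e x t ->
 (if t is p :: _ then sub_rel EQ x p || ((x, p) \in A) else true) ->
 (if q is q1 :: _ then (if t is p :: _ then q1 != p else true) else true) ->
 exists t', [/\ nb (last x q :: t'), path e (last x q) t', size t <= size t' &
            if t' is p :: _ then sub_rel EQ (last x q) p || ((last x q, p) \in A) else true].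
Proof.
elim: q x t => [|q1 q IH] x t ux pq hnb pt hrel hq1.
  by exists t; split => //; case: t {hnb pt} hrel.
case/andP: ux => xq uq; case/andP: pq => xq1 pq.
have n1 : nb (q1 :: x :: t) by case: t {hrel pt} hnb hq1 => [|p t] //= -> ->.
have p1 : path e q1 (x :: t) by rewrite /= pt andbT; apply: subrel_e; rewrite subrel_sym.
have r1 : sub_rel EQ q1 x || ((q1, x) \in A) by rewrite subrel_sym xq1.
have c1 : is_true (if q is q2 :: _ then q2 != x else true).
  case: q {IH uq pq} xq => [|q2 q] //=; rewrite !inE !negb_or => /and3P[_ h _].
  by rewrite eq_sym.
have [t' [h1 h2 h3 h4]] := IH q1 (x :: t) uq pq n1 p1 r1 c1.
exists t'; split => //; exact: leq_trans (leqnSn _) h3.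
Qed.

Lemma extend
  (Hall : forall x, x \in Qv -> exists v y, connect (sub_rel EQ) x v /\ (y, v) \in A)
  s : St s -> exists s', St s' /\ size s < size s'.
Proof.
case: s => [|x t] //= /and3P[hnb pt ht].
case: (boolP (x \in Qv)) => xQ.
- have [v [y [cxv yv]]] := Hall x xQ.
  move: yv; case/connectP: cxv => q0 pq0 ->; case/shortenP: pq0 => q pq uq _ yv.
  have r0 : is_true (if t is p :: _ then sub_rel EQ x p || ((x, p) \in A) else true).
    by case: t {hnb pt} ht => [|p t] // ->; rewrite orbT.
  have c0 : is_true (if q is q1 :: _ then (if t is p :: _ then q1 != p else true) else true).
    case: q {uq yv} pq => [|q1 q] //; case: t {hnb pt r0} ht => [|p t] //.
    move=> xp /= /andP[xq1 _]; apply: contraTneq xq1 => ->; exact: arc_nQ xp.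
  have [t' [h1 h2 h3 h4]] := qwalk uq pq hnb pt r0 c0.
  exists [:: y, last x q & t']; split; last by rewrite /= ltnS ltnS.
  rewrite /= yv (arc_e yv) h2 andbT /= andbT.
  case: t' {h2 h3} h1 h4 => [|p t'] //= h1 h4.
  apply/andP; split => //.
  apply: contraTneq h4 => <-.
  by rewrite negb_or subrel_sym arc_nQ // arc_asym.
- case: t hnb pt ht => [|p t0] hnb pt ht; first by rewrite ht in xQ.
  have [z zx] := back_step xQ ht.
  exists [:: z, x, p & t0]; split => //.
  rewrite /= zx (arc_e zx) /= hnb /= -[x]/(x) andbT.
  move: pt => /= /andP[-> ->]; rewrite !andbT; apply: contraTneq zx => ->; exact: arc_asym ht.
Qed.

Lemma source_exists x0 : x0 \in Qv ->
  exists2 x, x \in Qv & forall v y, connect (sub_rel EQ) x v -> (y, v) \notin A.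
Proof.
move=> x0Q.
case: (boolP [exists x, (x \in Qv) &&
   [forall v, connect (sub_rel EQ) x v ==> [forall y, (y, v) \notin A]]]).
  case/existsP => x /andP[xQ /forallP h]; exists x => // v y cv.
  by have := h v; rewrite cv /= => /forallP; apply.
move=> hn; exfalso.
have Hall : forall x, x \in Qv -> exists v y, connect (sub_rel EQ) x v /\ (y, v) \in A.
  move=> x xQ; move: hn; rewrite negb_exists => /forallP /(_ x).
  rewrite xQ /= negb_forall => /existsP [v]; rewrite negb_imply => /andP[cv].
  rewrite negb_forall => /existsP[y]; rewrite negbK => yv.
  by exists v, y.
have grow : forall n, exists s, St s /\ n <= size s.
  elim => [|n [s [hs hn']]]; first by exists [:: x0]; rewrite /= x0Q.
  have [s' [hs' hlt]] := extend Hall hs.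
  exists s'; split => //; exact: leq_ltn_trans hn' hlt.
have [s [hs hsz]] := grow #|T|.+1.
case: s hs hsz => [|x t] // /and3P[hnb pt _] hsz.
have u := nb_uniq eirr acyc pt hnb.
move: (max_card (mem (x :: t))); rewrite (card_uniqP u) => hle.
by have := leq_trans hsz hle; rewrite ltnn.
Qed.

Section Build.
Variable x0 : T.
Hypothesis x0Q : x0 \in Qv.
Hypothesis hsrc : forall v y, connect (sub_rel EQ) x0 v -> (y, v) \notin A.

Let C := [set v | connect (sub_rel EQ) x0 v].
Let EQ' := [set s in EQ | s \subset C].
Let A' := [set a in A | a.1 \in C].
Let E' := [set [set a.1; a.2] | a in A'].
Let w v := odflt v [pick y | (v, y) \in A].

Lemma ssym : symmetric (sub_rel EQ).
Proof. move=> a b; exact: subrel_sym. Qed.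

Lemma C_Qv v : v \in C -> v \in Qv.
Proof.
rewrite inE => /connectP[p pp ->]; case/lastP: p pp => [|p u] //.
by rewrite rcons_path last_rcons => /andP[_ /subrel_Qv[]].
Qed.

Lemma EQ_C s v : s \in EQ -> v \in s -> v \in C -> s \subset C.
Proof.
move=> sEQ vs vC.
have [a [b [eab nab sab]]] := edgeP eirr (subsetP hEQ _ sEQ).
have sr : sub_rel EQ a b by rewrite /sub_rel -sab.
have aC : a \in C -> b \in C.
  rewrite !inE => h; apply: connect_trans h (connect1 sr).
have bC : b \in C -> a \in C.
  rewrite !inE => h; apply: connect_trans h (connect1 _); by rewrite subrel_sym.
move: vs; rewrite sab !inE => /orP[/eqP vE|/eqP vE]; subst v;
  apply/subsetP => z; rewrite !inE => /orP[/eqP->|/eqP->];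
  rewrite -?inE; by [ | apply: aC | apply: bC].
Qed.

Lemma svE : sub_vertices EQ' = C.
Proof.
apply/setP => v; apply/svP/idP => [[s]|vC].
  by rewrite inE => /andP[_ /subsetP h] /h.
have [s sEQ vs] := svP _ _ (C_Qv vC).
by exists s => //; rewrite inE sEQ (EQ_C sEQ vs vC).
Qed.

Lemma degQ_eq v : v \in C -> degQ EQ' v = degQ EQ v.
Proof.
move=> vC; rewrite /degQ; apply: eq_card => s; rewrite !inE.
apply/andP/andP => [[/andP[h1 _] h2] // | [h1 h2]]; split => //.
by rewrite h1 (EQ_C h1 h2 vC).
Qed.

Lemma wP v : v \in Qv -> (v, w v) \in A.
Proof.
move/hi => [/eqP /cards1P [z hz] _].
have : z \in [set y | (v, y) \in A] by rewrite hz inE.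
rewrite inE /w => vz; case: pickP => [y //|/(_ z)]; by rewrite vz.
Qed.

Lemma wU v y : v \in Qv -> (v, y) \in A -> y = w v.
Proof.
move=> vQ vy; have := wP vQ; move/hi: vQ => [/eqP /cards1P [z hz] _] vw.
have : y \in [set y | (v, y) \in A] by rewrite inE.
have : w v \in [set y | (v, y) \in A] by rewrite inE.
by rewrite hz !inE => /eqP -> /eqP ->.
Qed.

Lemma A'A : A' \subset A.
Proof. by apply/subsetP => a; rewrite inE => /andP[]. Qed.

Lemma build : good_subgraph e EQ' /\ is_tree (sub_vertices EQ') (sub_rel EQ').
Proof.
have x0C : x0 \in C by rewrite inE connect0.
have CC v : v \in C -> connect (sub_rel EQ) x0 v by rewrite inE.
rewrite svE; split.
  split.
  - have [s sEQ x0s] := svP _ _ x0Q.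
    apply/set0Pn; exists s; by rewrite inE sEQ (EQ_C sEQ x0s x0C).
  - apply/subsetP => s; rewrite inE => /andP[h _]; exact: subsetP hEQ _ h.
  exists E'; split.
  - apply/subsetP => s; rewrite inE => /andP[]; rewrite inE => /andP[snEQ' sed].
    case/existsP => x /andP[xs]; rewrite svE => xC.
    have snEQ : s \notin EQ.
      by apply: contra snEQ' => sEQ; rewrite inE sEQ (EQ_C sEQ xs xC).
    have sE : s \in E.
      apply: (subsetP hE1); rewrite inE inE snEQ sed /=.
      by apply/existsP; exists x; rewrite xs (C_Qv xC).
    have [a [b [eab nab sab]]] := edgeP eirr sed.
    have [y [nxy sxy]] : exists y, x != y /\ s = [set x; y].
      move: xs; rewrite sab !inE => /orP[/eqP->|/eqP->].
        by exists b.
      by exists a; rewrite eq_sym setUC.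
    have := hor.2 x y nxy; rewrite -sxy => /(_ sE).
    rewrite (negbTE (hsrc y (CC _ xC))) addbF => xy.
    apply/imsetP; exists (x, y); first by rewrite inE xy xC.
    by rewrite sxy.
  - apply/subsetP => s /imsetP[[a b]]; rewrite inE => /andP[ab aC] -> /=.
    have [h1 h2] := arcE2 ab.
    rewrite inE h1 andbT; apply: contra h2; by rewrite inE => /andP[].
  exists A'; split.
  - split.
      by move=> x y xy; apply/imsetP; exists (x, y).
    move=> x y nxy /imsetP[[a b] ab] /= E0.
    move: (ab); rewrite inE => /andP[abA aC].
    have nab : a != b by apply: contraTneq (arc_e abA) => ->; rewrite eirr.
    case: (set2_eq nab E0) => [[-> ->]|[-> ->]].
      by rewrite ab addTb inE (negbTE (arc_asym abA)).
    by rewrite ab addbT inE (negbTE (arc_asym abA)).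
  exists (fun v => [:: w v]); split.
  - move=> v; rewrite svE => vC; have vw := wP (C_Qv vC).
    rewrite /= inE !andbT inE vw vC andbT.
    rewrite andbT; by apply: contraTneq (arc_e vw) => <-; rewrite eirr.
  - move=> a; split.
      rewrite inE => /andP[aA aC]; exists a.1; first by rewrite svE.
      case: a aA aC => a b /= ab aC.
      by rewrite (wU (C_Qv aC) ab) inE.
    case=> v; rewrite svE => vC; rewrite /arcs_of /= inE => /eqP->.
    by rewrite inE /= (wP (C_Qv vC)) vC.
  - move=> v; rewrite svE => vC; have vQ := C_Qv vC; have [h1 h2] := hi vQ.
    have din0 : forall B : {set T * T}, B \subset A -> din B v = 0.
      move=> B BA; rewrite /din; apply/eqP; rewrite cards_eq0; apply/eqP/setP => y.
      rewrite !inE; apply/negbTE; apply: contra (hsrc y (CC _ vC)); exact: (subsetP BA).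
    split.
      rewrite -h1 /dout; apply: eq_card => y; by rewrite !inE /= (CC _ vC) andbT.
    by rewrite din0 ?A'A // degQ_eq // -h2 din0.
  - by move=> v x _; rewrite /= in_nil.
  - move=> v x; rewrite svE => vC hx.
    apply: (@leq_ltn_trans (din A x)).
      apply: subset_leq_card; apply/subsetP => y; rewrite !inE; by case/andP.
    case: hx => ->; first exact: lt_of_Q (C_Qv vC).
    exact: lt_of_arc (wP (C_Qv vC)).
have pathC : forall p a, a \in C -> path (sub_rel EQ) a p ->
    path (sub_rel EQ') a p && all (mem C) p.
  elim=> [|b p IH] a aC //= /andP[ab pb].
  have sC : [set a; b] \subset C by apply: EQ_C ab _ aC; rewrite !inE eqxx.
  have bC : b \in C by apply: (subsetP sC); rewrite !inE eqxx orbT.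
  have -> : sub_rel EQ' a b by rewrite /sub_rel inE sC andbT.
  by rewrite /= bC; apply: IH.
split.
- by apply/set0Pn; exists x0.
- move=> x y xC yC.
  have cxy : connect (sub_rel EQ) x y.
    apply: connect_trans (CC _ yC); rewrite (sym_connect_sym ssym); exact: CC.
  case/connectP: cxy => p pp ->; exists p.
  by case/andP: (pathC p x xC pp) => -> ->.
- move=> c _ uc sc; apply/negP => cc.
  have ce : cycle e c.
    case: c {uc sc} cc => [|x c] //=; apply: sub_path => a b.
    rewrite /sub_rel inE => /andP[h _]; apply: subrel_e; exact: h.
  by move: (acyc uc sc); rewrite ce.
Qed.

End Build.
End Main.


Unset Implicit Arguments.
Set Strict Implicit.

Theorem proposition7p2 (T : finType) (e : rel T) :
  symmetric e -> irreflexive e -> is_tree [set: T] e ->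
  (exists EQ : {set {set T}}, good_subgraph e EQ) <->
  (exists EQ : {set {set T}},
      good_subgraph e EQ /\ is_tree (sub_vertices EQ) (sub_rel EQ)).
Proof.
move=> esym eirr [_ _ htr].
have acyc : forall c : seq T, uniq c -> 3 <= size c -> ~~ cycle e c.
  move=> c; apply: htr; apply/allP => z _; by rewrite inE.
split; last by case=> EQ [h _]; exists EQ.
case=> EQ [hne hsub [E [h1 h2 [A [hor [P [hp hA hi hii hiii]]]]]]].
have [s sEQ] := set0Pn _ hne.
have [a [b [_ _ sab]]] := edgeP eirr (subsetP hsub _ sEQ).
have aQ : a \in sub_vertices EQ by apply/svP; exists s; rewrite // sab !inE eqxx.
have [x0 x0Q hsrc] := source_exists esym eirr acyc hsub h2 hor hA aQ.
eexists; exact: (build esym eirr acyc hsub h1 h2 hor hA hi hii hiii x0Q hsrc).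
Qed.
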